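(* Let $\mathbf{A}\in\mathbb{R}^{(\ell m)\times(qn)}$ be a block matrix with $\ell\times q$ blocks of size $m\times n$, with distinct nonzero blocks $\mathbf{A}_1,\dots,\mathbf{A}_p$, multiplicities $\eta_k$ and location-tally matrices $\mathbf{E}_1,\dots,\mathbf{E}_p\in\mathbb{R}^{\ell\times q}$. Let $\mathbf{B}=\mathbf{S}_{\ell,m}\mathbf{A}\mathbf{S}_{q,n}^\top$ and let $\mathscr{B}\subseteq\mathbb{R}^{\ell\times q}$ be the span of the blocks of $\mathbf{B}$. Define $\mathtt{mat}_{\mathscr{E}}:\mathbb{R}^p\to\mathbb{R}^{\ell\times q}$ by $\mathtt{mat}_{\mathscr{E}}(\mathbf{v})=\sum_{k=1}^p v_k\mathbf{E}_k$, and define $\mathtt{vec}_{\mathscr{E}}$ on $\mathrm{span}\{\mathbf{E}_1,\dots,\mathbf{E}_p\}$ by $\mathtt{vec}_{\mathscr{E}}\bigl(\sum_k c_k\mathbf{E}_k\bigr)=(c_1,\dots,c_p)^\top$. Let $\mathbf{A}_{(2)}\in\mathbb{R}^{p\times mn}$ be the matrix whose $k$th row is $\mathrm{vec}(\sqrt{\eta_k}\mathbf{A}_k)^\top$. Then $\mathscr{B}\subseteq\mathrm{span}\{\mathbf{E}_k\}$, and $\mathtt{vec}_{\mathscr{E}}$ restricted to $\mathscr{B}$ is a linear bijection from $\mathscr{B}$ onto the column space of $\mathbf{A}_{(2)}$, with inverse the restriction of $\mathtt{mat}_{\mathscr{E}}$. In particular $\mathscr{B}$ is isomorphic to $\ma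thrm{colspace}(\mathbf{A}_{(2)})$.
   Context: Blocks of $\mathbf{A}$: $\mathbf{A}^{(\gamma,\delta)}_{\alpha\beta}=\mathbf{A}_{(\gamma-1)m+\alpha,(\delta-1)n+\beta}$, $(\gamma,\delta)\in[\ell]\times[q]$. $\eta_k$ is the number of block positions with $\mathbf{A}^{(\gamma,\delta)}=\mathbf{A}_k$, and $[\mathbf{E}_k]_{\gamma\delta}=1/\sqrt{\eta_k}$ if $\mathbf{A}^{(\gamma,\delta)}=\mathbf{A}_k$, else $0$ (the $\mathbf{E}_k$ have disjoint supports, hence are linearly independent). For $a,b\ge1$, $s=ab$, $\mathbf{S}_{a,b}\in\mathbb{R}^{s\times s}$ is the permutation matrix whose row $(i-1)a+j$ is $\mathbf{e}_{(j-1)b+i}^\top$ ($i\in[b]$, $j\in[a]$). $\mathbf{B}\in\mathbb{R}^{(m\ell)\times(nq)}$ is viewed as an $m\times n$ grid of $\ell\times q$ blocks $\mathbf{B}^{(\alpha,\beta)}$ with $\mathbf{B}^{(\alpha,\beta)}_{\gamma\delta}=\mathbf{B}_{(\alpha-1)\ell+\gamma,(\beta-1)q+\delta}$. $\mathbf{A}_{(2)}$ is the mode-2 unfolding of the tensor $\mathcal{A}\in\mathbb{R}^{m\times p\times n}$ with $\mathcal{A}_{ikj}=\sqrt{\eta_k}[\mathbf{A}_k]_{ij}$. *)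

(* Defs.v *)
From HB Require Import structures.
From mathcomp Require Import all_boot all_order all_algebra.
Set Implicit Arguments. Unset Strict Implicit. Unset Printing Implicit Defensive.
Import Order.TTheory GRing.Theory Num.Theory.
Local Open Scope ring_scope.

(* All indices are 0-based: i : 'I_n stands for the paper's i+1. *)

Section Defs.
Variable R : rcfType.

(* S_{a,b} : row  i*a + j  (i < b, j < a) is e_{j*b + i}^T,
   i.e. entry (r, c) = 1 iff c = (r %% a) * b + r %/ a. *)
Definition Sperm (a b : nat) : 'M[R]_(a * b) :=
  \matrix_(r, c) (if (c : nat) == ((r %% a) * b + r %/ a)%N then 1 else 0).

(* Block (g, d) of A : 'M_(l*m, q*n): entry (al, be) is A_{g*m+al, d*n+be}. *)
Definition Ablock (l q m n : nat) (A : 'M[R]_(l * m, q * n))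
  (g : 'I_l) (d : 'I_q) : 'M[R]_(m, n) :=
  \matrix_(al, be) A (mxvec_index g al) (mxvec_index d be).

(* B viewed as an m x n grid of l x q blocks:
   B^{(al,be)}_{g d} = B_{al*l+g, be*q+d}. *)
Definition Bblock (l q m n : nat) (B : 'M[R]_(l * m, q * n))
  (al : 'I_m) (be : 'I_n) : 'M[R]_(l, q) :=
  \matrix_(g, d) B (cast_ord (mulnC m l) (mxvec_index al g))
                   (cast_ord (mulnC n q) (mxvec_index be d)).

Definition Bmat (l q m n : nat) (A : 'M[R]_(l * m, q * n)) : 'M[R]_(l * m, q * n) :=
  Sperm l m *m A *m (Sperm q n)^T.

Definition Bspace (l q m n : nat) (A : 'M[R]_(l * m, q * n)) : {vspace 'M[R]_(l, q)} :=
  (\sum_(al < m) \sum_(be < n) <[Bblock (Bmat A) al be]>)%VS.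

Definition eta (l q m n : nat) (A : 'M[R]_(l * m, q * n)) (Ak : 'M[R]_(m, n)) : nat :=
  #|[set gd : 'I_l * 'I_q | Ablock A gd.1 gd.2 == Ak]|.

Definition Emat (l q m n : nat) (A : 'M[R]_(l * m, q * n)) (Ak : 'M[R]_(m, n)) : 'M[R]_(l, q) :=
  \matrix_(g, d) (if Ablock A g d == Ak then (Num.sqrt (eta A Ak)%:R)^-1 else 0).

Definition Etuple (l q m n p : nat) (A : 'M[R]_(l * m, q * n))
  (Ak : 'I_p -> 'M[R]_(m, n)) : p.-tuple 'M[R]_(l, q) :=
  [tuple Emat A (Ak k) | k < p].

Definition Espace (l q m n p : nat) (A : 'M[R]_(l * m, q * n))
  (Ak : 'I_p -> 'M[R]_(m, n)) : {vspace 'M[R]_(l, q)} :=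
  <<Etuple A Ak>>%VS.

Definition matE (l q m n p : nat) (A : 'M[R]_(l * m, q * n))
  (Ak : 'I_p -> 'M[R]_(m, n)) (v : 'cV[R]_p) : 'M[R]_(l, q) :=
  \sum_(k < p) v k 0 *: Emat A (Ak k).

Definition vecE (l q m n p : nat) (A : 'M[R]_(l * m, q * n))
  (Ak : 'I_p -> 'M[R]_(m, n)) (M : 'M[R]_(l, q)) : 'cV[R]_p :=
  \col_k coord (Etuple A Ak) k M.

Definition A2 (l q m n p : nat) (A : 'M[R]_(l * m, q * n))
  (Ak : 'I_p -> 'M[R]_(m, n)) : 'M[R]_(p, m * n) :=
  \matrix_(k < p) mxvec (Num.sqrt (eta A (Ak k))%:R *: Ak k).

Definition colspace (p N : nat) (X : 'M[R]_(p, N)) : {vspace 'cV[R]_p} :=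
  (\sum_(j < N) <[col j X]>)%VS.

End Defs.

(* Main.v *)
Require Import Defs.
From HB Require Import structures.
From mathcomp Require Import all_boot all_order all_algebra.
Import Order.TTheory GRing.Theory Num.Theory.
Local Open Scope ring_scope.

Lemma index_allpairs (S T : eqType) (s : seq S) (t : seq T) x y :
  x \in s -> y \in t ->
  index (x, y) [seq (a, b) | a <- s, b <- t] = (index x s * size t + index y t)%N.
Proof.
move=> xs yt; elim: s xs => //= a s IH.
rewrite inE /=; case: (eqVneq a x) => [-> _|ax /= xs].
  rewrite index_cat.
  have -> : (x, y) \in [seq (x, b) | b <- t] by apply/mapP; exists y.
  by rewrite index_map // => ?? [].
rewrite index_cat ifN; last by apply/mapP => -[b _ [/esym/eqP]]; rewrite (negPf ax).
by rewrite size_map IH // mulSn addnA.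
Qed.

Lemma index_enum_ord m (i : 'I_m) : index i (enum 'I_m) = i.
Proof.
have := congr1 val (enum_rank_ord i).
rewrite /enum_rank enum_rank_in.unlock insubdK; first by move=> ->.
by rewrite unfold_in /= cardE index_mem mem_enum.
Qed.

Lemma mxvec_indexE m n (i:'I_m) (j:'I_n) : nat_of_ord (mxvec_index i j) = (i * n + j)%N.
Proof.
rewrite /mxvec_index /= /enum_rank enum_rank_in.unlock /= insubdK; last first.
  by rewrite unfold_in /= cardE index_mem mem_enum.
rewrite enumT unlock /= /prod_enum.
by rewrite index_allpairs ?mem_enum // !index_enum_ord size_enum_ord.
Qed.

Lemma val_castE a b (e : a = b) (i : 'I_a) : nat_of_ord (cast_ord e i) = nat_of_ord i.
Proof. by []. Qed.

Lemma Sperm_mull (R : rcfType) a b N (M : 'M[R]_(a * b, N)) (r : 'I_(a * b)) (s : 'I_N) (c0 : 'I_(a * b)) :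
  nat_of_ord c0 = ((r %% a) * b + r %/ a)%N -> (Sperm R a b *m M) r s = M c0 s.
Proof.
move=> hc; rewrite mxE (bigD1 c0) //= mxE hc eqxx mul1r big1 ?addr0 // => c hc'.
rewrite mxE -hc; case: eqP => [/val_inj/eqP|]; first by rewrite (negPf hc').
by rewrite mul0r.
Qed.

Lemma Sperm_mulr (R : rcfType) a b N (M : 'M[R]_(N, a * b)) (r : 'I_N) (s : 'I_(a * b)) (c0 : 'I_(a * b)) :
  nat_of_ord c0 = ((s %% a) * b + s %/ a)%N -> (M *m (Sperm R a b)^T) r s = M r c0.
Proof.
move=> hc; rewrite mxE (bigD1 c0) //= !mxE hc eqxx mulr1 big1 ?addr0 // => c hc'.
rewrite !mxE -hc; case: eqP => [/val_inj/eqP|]; first by rewrite (negPf hc').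
by rewrite mulr0.
Qed.

Lemma Bblock_eq (R : rcfType) l q m n (A : 'M[R]_(l * m, q * n)) al be :
  Bblock (Bmat A) al be = \matrix_(g, d) Ablock A g d al be.
Proof.
apply/matrixP => g d; rewrite /Bmat /Bblock /Ablock [X in X = _]mxE [X in _ = X]mxE [X in _ = X]mxE.
rewrite (@Sperm_mulr _ _ _ _ _ _ _ (mxvec_index d be)); last first.
  rewrite (@val_castE _ _ (mulnC n q)) !mxvec_indexE.
  have dq := ltn_ord d.
  by rewrite mulnC modnMDl modn_small // divnMDl ?(leq_ltn_trans (leq0n d) dq) // divn_small // addn0 mulnC.
rewrite (@Sperm_mull _ _ _ _ _ _ _ (mxvec_index g al)) //.
rewrite (@val_castE _ _ (mulnC m l)) !mxvec_indexE.
have gl := ltn_ord g.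
by rewrite mulnC modnMDl modn_small // divnMDl ?(leq_ltn_trans (leq0n g) gl) // divn_small // addn0 mulnC.
Qed.

Fact vecE_is_semilinear (R : rcfType) l q m n p (A : 'M[R]_(l * m, q * n))
  (Ak : 'I_p -> 'M[R]_(m, n)) : semilinear (vecE A Ak).
Proof.
by split=> [a M|M N]; apply/colP => k; rewrite !mxE ?linearZ ?linearD.
Qed.
HB.instance Definition _ (R : rcfType) l q m n p (A : 'M[R]_(l * m, q * n))
  (Ak : 'I_p -> 'M[R]_(m, n)) :=
  GRing.isSemilinear.Build R 'M[R]_(l, q) 'cV[R]_p _ (vecE A Ak)
    (@vecE_is_semilinear R l q m n p A Ak).

Fact matE_is_semilinear (R : rcfType) l q m n p (A : 'M[R]_(l * m, q * n))
  (Ak : 'I_p -> 'M[R]_(m, n)) : semilinear (matE A Ak).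
Proof.
split=> [a v|v w]; rewrite /matE.
  by rewrite scaler_sumr; apply: eq_bigr => k _; rewrite mxE scalerA.
by rewrite -big_split; apply: eq_bigr => k _; rewrite mxE scalerDl.
Qed.
HB.instance Definition _ (R : rcfType) l q m n p (A : 'M[R]_(l * m, q * n))
  (Ak : 'I_p -> 'M[R]_(m, n)) :=
  GRing.isSemilinear.Build R 'cV[R]_p 'M[R]_(l, q) _ (matE A Ak)
    (@matE_is_semilinear R l q m n p A Ak).

Lemma eta_pos (R : rcfType) l q m n (A : 'M[R]_(l * m, q * n)) (B : 'M[R]_(m, n)) :
  (exists g d, Ablock A g d = B) -> (0 < Defs.eta A B)%N.
Proof.
case=> g [d hgd]; rewrite /eta card_gt0; apply/set0Pn; exists (g, d).
by rewrite inE /= hgd.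
Qed.

Lemma sqrt_eta_neq0 (R : rcfType) l q m n (A : 'M[R]_(l * m, q * n)) (B : 'M[R]_(m, n)) :
  (exists g d, Ablock A g d = B) -> Num.sqrt ((Defs.eta A B)%:R : R) != 0.
Proof.
move=> /eta_pos h; rewrite sqrtr_eq0 -ltNge ltr0n //.
Qed.

Lemma Etuple_nth (R : rcfType) l q m n p (A : 'M[R]_(l * m, q * n))
  (Ak : 'I_p -> 'M[R]_(m, n)) (i : 'I_p) : (Etuple A Ak)`_i = Emat A (Ak i).
Proof. by rewrite /Etuple nth_mktuple. Qed.

Lemma matE_sum (R : rcfType) l q m n p (A : 'M[R]_(l * m, q * n))
  (Ak : 'I_p -> 'M[R]_(m, n)) v :
  matE A Ak v = \sum_(i < p) v i 0 *: (Etuple A Ak)`_i.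
Proof. by apply: eq_bigr => i _; rewrite Etuple_nth. Qed.

Lemma Efree (R : rcfType) l q m n p (A : 'M[R]_(l * m, q * n))
  (Ak : 'I_p -> 'M[R]_(m, n)) :
  injective Ak -> (forall k, exists g d, Ablock A g d = Ak k) ->
  free (Etuple A Ak).
Proof.
move=> inj blk; apply/freeP => c hc i.
have [g [d hgd]] := blk i.
have hc' : \sum_(k < p) c k *: Emat A (Ak k) = 0.
  by rewrite -[RHS]hc; apply: eq_bigr => k _; rewrite Etuple_nth.
move/matrixP/(_ g d): hc'.
rewrite summxE (bigD1 i) //= big1 ?addr0; last first.
  move=> k hk; rewrite !mxE hgd.
  by rewrite (inj_eq inj) eq_sym (negPf hk) mulr0.
rewrite !mxE hgd eqxx => /eqP.
rewrite mulf_eq0 invr_eq0 (negPf (sqrt_eta_neq0 _ _ _ _ _ _ _ (blk i))) orbF.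
by move/eqP.
Qed.

Lemma matE_col (R : rcfType) l q m n p (A : 'M[R]_(l * m, q * n))
  (Ak : 'I_p -> 'M[R]_(m, n)) :
  injective Ak -> (forall k, Ak k != 0) ->
  (forall k, exists g d, Ablock A g d = Ak k) ->
  (forall g d, Ablock A g d != 0 -> exists k, Ablock A g d = Ak k) ->
  forall al be, matE A Ak (col (mxvec_index al be) (A2 A Ak)) = Bblock (Bmat A) al be.
Proof.
move=> inj nz blk all al be; rewrite Bblock_eq; apply/matrixP => g d.
rewrite [RHS]mxE /matE summxE.
under eq_bigr do rewrite [X in X *: _]mxE [X in X *: _]mxE mxvecE mxE.
have [z|nz0] := eqVneq (Ablock A g d) 0.
  rewrite z mxE big1 // => k _; rewrite !mxE z eq_sym (negPf (nz k)).
  by rewrite mulr0.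
have [k0 hk0] := all g d nz0.
rewrite (bigD1 k0) //= big1 ?addr0; last first.
  move=> k hk; rewrite !mxE hk0 (inj_eq inj) eq_sym (negPf hk) mulr0.
  done.
rewrite !mxE hk0 eqxx mulrAC divff ?mul1r; last exact: (sqrt_eta_neq0 _ _ _ _ _ _ _ (blk k0)).
by rewrite -hk0 mxE.
Qed.

Theorem lemma2 (R : rcfType) (l q m n p : nat) (A : 'M[R]_(l * m, q * n))
  (Ak : 'I_p -> 'M[R]_(m, n))
  (* A_1, ..., A_p are distinct *)
  (Ak_inj : injective Ak)
  (* each A_k is nonzero *)
  (Ak_nz : forall k, Ak k != 0)
  (* each A_k is a block of A *)
  (Ak_block : forall k, exists g d, Ablock A g d = Ak k)
  (* every nonzero block of A is one of the A_k *)
  (Ak_all : forall g d, Ablock A g d != 0 -> exists k, Ablock A g d = Ak k) :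
  let BB := Bspace A in
  let EE := Espace A Ak in
  let CC := colspace (A2 A Ak) in
  [/\ (BB <= EE)%VS,
      (forall (a : R) (M N : 'M[R]_(l, q)), M \in BB -> N \in BB ->
          vecE A Ak (a *: M + N) = a *: vecE A Ak M + vecE A Ak N),
      [/\ (forall M, M \in BB -> vecE A Ak M \in CC),
           (forall v, v \in CC -> matE A Ak v \in BB),
           (forall M, M \in BB -> matE A Ak (vecE A Ak M) = M)
         & (forall v, v \in CC -> vecE A Ak (matE A Ak v) = v)]
    & \dim BB = \dim CC].
Proof.
move=> BB EE CC.
have Xfree := @Efree _ _ _ _ _ _ A Ak Ak_inj Ak_block.
have mcol := @matE_col _ _ _ _ _ _ A Ak Ak_inj Ak_nz Ak_block Ak_all.
have vm : forall v, vecE A Ak (matE A Ak v) = v.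
  by move=> v; apply/colP => k; rewrite mxE matE_sum coord_sum_free.
have vcol : forall al be,
    vecE A Ak (Bblock (Bmat A) al be) = col (mxvec_index al be) (A2 A Ak).
  by move=> al be; rewrite -mcol vm.
have mEE : forall v, matE A Ak v \in EE.
  move=> v; rewrite matE_sum; apply: rpred_sum => i _; apply: rpredZ.
  by apply: memv_span; apply: mem_nth; rewrite size_tuple.
have BE : (BB <= EE)%VS.
  apply/subv_sumP => al _; apply/subv_sumP => be _.
  by rewrite -memvE -mcol; exact: mEE.
have mv : forall M, M \in BB -> matE A Ak (vecE A Ak M) = M.
  move=> M /(subvP BE) ME; rewrite matE_sum [RHS](coord_span ME).
  by apply: eq_bigr => i _; rewrite mxE.
pose f := linfun (vecE A Ak).
pose g := linfun (matE A Ak).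
have sub3 : (BB <= f @^-1: CC)%VS.
  apply/subv_sumP => al _; apply/subv_sumP => be _.
  rewrite -memvE -memv_preim lfunE /= vcol memvE.
  by apply: (sumv_sup (mxvec_index al be)) => //; rewrite -memvE memv_line.
have h3 : forall M, M \in BB -> vecE A Ak M \in CC.
  by move=> M /(subvP sub3); rewrite -memv_preim lfunE.
have sub4 : (CC <= g @^-1: BB)%VS.
  apply/subv_sumP => j _; case/mxvec_indexP: j => al be.
  rewrite -memvE -memv_preim lfunE /= mcol memvE.
  by apply: (sumv_sup al) => //; apply: (sumv_sup be) => //; rewrite ?(-memvE, memv_line).
have h4 : forall v, v \in CC -> matE A Ak v \in BB.
  by move=> v /(subvP sub4); rewrite -memv_preim lfunE.
split => //.
- by move=> a M N _ _; rewrite linearP.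
have -> : CC = (f @: BB)%VS.
  apply/eqP; rewrite eqEsubv; apply/andP; split.
    apply/subvP => v vC; rewrite -(vm v) -[vecE _ _ _]lfunE.
    by apply: memv_img; apply: h4.
  by apply/subvP => v /memv_imgP [M MB ->]; rewrite lfunE; apply: h3.
rewrite limg_dim_eq //; apply/eqP; rewrite -subv0; apply/subvP => M.
rewrite memv_cap memv_ker memv0 lfunE /= => /andP [MB /eqP v0].
by rewrite -(mv M MB) v0 linear0.
Qed.
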